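(* Let $k\ge2$, $r\in\{k-1,k,k+1\}$ and let $K$ be a triangle or an axis-parallel rectangle. Then the sum defining $V^{r-1,k}_h(K)$ is direct, and the sequence $$0\longrightarrow\mathbb R\xrightarrow{\ \subset\ }\Sigma^r_h(K)\xrightarrow{\ \nabla\ }V^{r-1,k}_h(K)\xrightarrow{\ \nabla\times\ }W^{k-1}_h(K)\longrightarrow 0$$ is a complex and is exact.
   Context: Notation: for $\bm u=(u_1,u_2)^T$, $\nabla\times\bm u=\partial_{x_1}u_2-\partial_{x_2}u_1$; for a scalar $v$, $\bm\nabla\times v=(\partial_{x_2}v,-\partial_{x_1}v)^T$. $P_i(K)$ is the space of polynomials of total degree at most $i$ on $K$, $\bm P_i(K)=[P_i(K)]^2$, $\widetilde P_i$ the homogeneous polynomials of degree $i$, $Q_{i,j}(K)$ the polynomials of degree at most $i$ in $x_1$ and at most $j$ in $x_2$, $Q_i=Q_{i,i}$; spaces with negative index are $\{0\}$. $\bm x=(x_1,x_2)^T$, $\bm x^\perp=(-x_2,x_1)^T$. The Poincaré operator is $(\mathfrak p u)(\bm x)=\int_0^1 t\,\bm x^\perp u(t\bm x)\,dt$ (origin at $0\in\mathbb R^2$). An element $K$ is either a triangle with barycentric coordinates $\lambda_1,\lambda_2,\lambda_3$, or an axis-parallel rectangle $K=(x_l,x_r)\times(y_d,y_u)$ with $h_x=x_r-x_l$, $h_y=y_u-y_d$; $\bm\tau_e$ denotes a unit tangent to an edge $e$. Bubbles: $B_t=\lambda_1\lambda_2\lambda_3$, $B_r=h_x^{-2}h_y^{-2}(x_1-x_l)(x_1-x_r)(x_2-y_d)(x_2-y_u)$.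 Local spaces, for an integer $k\ge2$ and $r\in\{k-1,k,k+1\}$: $\Sigma^r_h(K)=P_r(K)$ (triangle) or $Q_r(K)$ (rectangle). For a triangle, $W^{k-1}_h(K)=P_{k-1}(K)$ if $k\ge4$ and $P_{k-1}(K)\oplus\mathrm{span}\{B_t\}$ if $k=2,3$; for a rectangle, $W^{k-1}_h(K)=Q_{k-1}(K)$ if $k\ge3$ and $Q_1(K)\oplus\mathrm{span}\{B_r\}$ if $k=2$. Modified Poincaré operator: $\widetilde{\mathfrak p}w=\mathfrak pw-\nabla\Phi w$, where $\Phi$ is a fixed linear map from $W^{k-1}_h(K)$ into polynomials such that for every $w$ the function $(\mathfrak p w-\nabla\Phi w)\cdot\bm\tau_e$ is constant on each edge $e$ of $K$, and such that $\Phi(W^{k-1}_h(K)\cap P_j(K))\subset P_{j+1}(K)$ for triangles, resp. $\Phi(W^{k-1}_h(K)\cap Q_j(K))\subset Q_{j+1}(K)$ for rectangles, for every $j\ge0$. Then $V^{r-1,k}_h(K)=\nabla\Sigma^r_h(K)+\mathfrak pW^{k-1}_h(K)$ when $r=k+1$, or when $r=k$ and $k\ge4$; and $V^{r-1,k}_h(K)=\nabla\Sigma^r_h(K)+\widetilde{\mathfrak p}W^{k-1}_h(K)$ when $r=k-1$, or when $r=k$ and $k\in\{2,3\}$. *)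

(* Defs.v *)
From HB Require Import structures.
From mathcomp Require Import all_boot all_order all_algebra.
From mathcomp Require Import mpoly.
Set Implicit Arguments. Unset Strict Implicit. Unset Printing Implicit Defensive.
Import Order.TTheory GRing.Theory Num.Theory.
Local Open Scope ring_scope.

Section Defs.
Variable R : rcfType.

Definition poly2 := {mpoly R[2]}.
Definition vec := (poly2 * poly2)%type.

Definition i0 : 'I_2 := ord0.
Definition i1 : 'I_2 := ord_max.
Definition x1 : poly2 := 'X_i0.
Definition x2 : poly2 := 'X_i1.

Definition vadd (u v : vec) : vec := (u.1 + v.1, u.2 + v.2).
Definition vsub (u v : vec) : vec := (u.1 - v.1, u.2 - v.2).
Definition vzero : vec := (0, 0).

Definition grad (s : poly2) : vec := (mderiv i0 s, mderiv i1 s).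
Definition curl (u : vec) : poly2 := mderiv i0 u.2 - mderiv i1 u.1.

Definition inP (i : nat) (p : poly2) : Prop :=
  forall m, m \in msupp p -> (mdeg m <= i)%N.
Definition inQ2 (i j : nat) (p : poly2) : Prop :=
  forall m, m \in msupp p -> (m i0 <= i)%N /\ (m i1 <= j)%N.
Definition inQ (i : nat) (p : poly2) : Prop := inQ2 i i p.

(* Poincare operator  (p u)(x) = \int_0^1 t x^perp u(t x) dt, computed
   monomialwise: \int_0^1 t * t^{|m|} dt = 1/(|m|+2). *)
Definition poincare_int (u : poly2) : poly2 :=
  \sum_(m <- msupp u) (u@_m / (mdeg m + 2)%:R) *: 'X_[m].
Definition poincare (u : poly2) : vec :=
  (- x2 * poincare_int u, x1 * poincare_int u).

Definition mpoincare (Phi : poly2 -> poly2) (w : poly2) : vec :=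
  vsub (poincare w) (grad (Phi w)).

Definition pt := (R * R)%type.
Definition evalp (p : poly2) (a : pt) : R :=
  p.@[fun i : 'I_2 => if i == i0 then a.1 else a.2].

(* Elements: a triangle (three vertices) or an axis-parallel rectangle
   (x_l, x_r) x (y_d, y_u). *)
Inductive elem :=
  | Tri of pt & pt & pt
  | Rect of R & R & R & R.

Definition det2 (u v : pt) : R := u.1 * v.2 - u.2 * v.1.
Definition psub (a b : pt) : pt := (a.1 - b.1, a.2 - b.2).

Definition valid_elem (K : elem) : Prop :=
  match K with
  | Tri a b c => det2 (psub b a) (psub c a) != 0
  | Rect xl xr yd yu => xl < xr /\ yd < yu
  end.

(* barycentric coordinate of vertex ai in triangle (ai, aj, ak):
   lambda(x) = det(aj - x, ak - x) / det(aj - ai, ak - ai) *)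
Definition bary (ai aj ak : pt) : poly2 :=
  (det2 (psub aj ai) (psub ak ai))^-1 *:
   ((aj.1%:MP - x1) * (ak.2%:MP - x2) - (aj.2%:MP - x2) * (ak.1%:MP - x1)).

Definition bubble_tri (a b c : pt) : poly2 :=
  bary a b c * bary b c a * bary c a b.

Definition bubble_rect (xl xr yd yu : R) : poly2 :=
  ((xr - xl) ^- 2 * (yu - yd) ^- 2) *:
  ((x1 - xl%:MP) * (x1 - xr%:MP) * (x2 - yd%:MP) * (x2 - yu%:MP)).

Definition edges (K : elem) : seq (pt * pt) :=
  match K with
  | Tri a b c => [:: (a, b); (b, c); (c, a)]
  | Rect xl xr yd yu =>
      [:: ((xl, yd), (xr, yd)); ((xr, yd), (xr, yu));
          ((xr, yu), (xl, yu)); ((xl, yu), (xl, yd))]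
  end.

Definition tangent (e : pt * pt) : pt :=
  let d := psub e.2 e.1 in
  let n := Num.sqrt (d.1 ^+ 2 + d.2 ^+ 2) in (d.1 / n, d.2 / n).

Definition tang_comp (v : vec) (e : pt * pt) : poly2 :=
  (tangent e).1 *: v.1 + (tangent e).2 *: v.2.

Definition const_on_edge (f : poly2) (e : pt * pt) : Prop :=
  forall s : R, 0 <= s <= 1 ->
    evalp f (e.1.1 + s * (e.2.1 - e.1.1), e.1.2 + s * (e.2.2 - e.1.2))
    = evalp f e.1.

Definition Sigma (r : nat) (K : elem) (s : poly2) : Prop :=
  match K with
  | Tri _ _ _ => inP r s
  | Rect _ _ _ _ => inQ r s
  end.

Definition Wsp (k : nat) (K : elem) (w : poly2) : Prop :=
  match K with
  | Tri a b c =>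
      if (4 <= k)%N then inP k.-1 w
      else exists p c0, inP k.-1 p /\ w = p + c0 *: bubble_tri a b c
  | Rect xl xr yd yu =>
      if (3 <= k)%N then inQ k.-1 w
      else exists p c0, inQ 1 p /\ w = p + c0 *: bubble_rect xl xr yd yu
  end.

Definition use_tilde (k r : nat) : bool :=
  (r == k.-1) || ((r == k) && (k <= 3)%N).

Definition Pop (Phi : poly2 -> poly2) (k r : nat) (w : poly2) : vec :=
  if use_tilde k r then mpoincare Phi w else poincare w.

Definition Vsp (Phi : poly2 -> poly2) (k r : nat) (K : elem) (v : vec) : Prop :=
  exists s w, Sigma r K s /\ Wsp k K w /\ v = vadd (grad s) (Pop Phi k r w).

Definition Phi_admissible (Phi : poly2 -> poly2) (k : nat) (K : elem) : Prop :=
  [/\ (forall (a : R) w1 w2, Wsp k K w1 -> Wsp k K w2 ->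
         Phi (a *: w1 + w2) = a *: Phi w1 + Phi w2),
      (forall w, Wsp k K w -> forall e, e \in edges K ->
         const_on_edge (tang_comp (mpoincare Phi w) e) e) &
      (forall (j : nat) w, Wsp k K w ->
         match K with
         | Tri _ _ _ => inP j w -> inP j.+1 (Phi w)
         | Rect _ _ _ _ => inQ j w -> inQ j.+1 (Phi w)
         end)].

End Defs.

(* Main.v *)
Require Import Defs.
From HB Require Import structures.
From mathcomp Require Import all_boot all_order all_algebra.
From mathcomp Require Import mpoly.
From mathcomp Require Import zify ring.
Import Order.TTheory GRing.Theory Num.Theory.
Local Open Scope ring_scope.

Section Aux.
Variable R : rcfType.
Implicit Types (p s u w : poly2 R) (m : 'X_{1..2}).

Lemma mdeg2 m : mdeg m = (m i0 + m i1)%N.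
Proof. by rewrite mdegE big_ord_recr big_ord_recr big_ord0 /=; congr (_ + _)%N; congr (m _); apply: val_inj. Qed.

Lemma xderivX (i : 'I_2) m : 'X_i * mderiv i 'X_[m] = (m i)%:R *: 'X_[m] :> poly2 R.
Proof.
rewrite mderivX -scalerAr -mpolyXD.
case E: (m i) => [|n]; first by rewrite !scale0r.
congr (_ *: 'X_[_]); apply/mnmP => j; rewrite mnmDE mnmBE mnm1E.
case: eqP => [<-|_]; lia.
Qed.

Lemma mderivXi (i : 'I_2) : mderiv i ('X_i : poly2 R) = 1.
Proof.
rewrite mderivX. have ->: (U_(i) - U_(i) = 0)%MM by apply/mnmP => j; rewrite mnmBE mnm0E subnn.
by rewrite mnm1E eqxx mpolyX0 scale1r. Qed.

Definition euler p : poly2 R := x1 R * mderiv i0 p + x2 R * mderiv i1 p.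

Lemma euler_sum (T : Type) (sq : seq T) (c : T -> R) (f : T -> 'X_{1..2}) :
  euler (\sum_(t <- sq) c t *: 'X_[f t]) =
  \sum_(t <- sq) (c t * (mdeg (f t))%:R) *: 'X_[f t].
Proof.
rewrite /euler; elim: sq => [|t sq IH]; first by rewrite !big_nil !mderiv0 !mulr0 addr0.
rewrite !big_cons -IH !mderivD !mderivZ !mulrDr -!scalerAr /x1 /x2 !xderivX.
rewrite mdeg2 natrD mulrDr scalerDl !scalerA.
set a := _ * mderiv _ _; set b := _ * mderiv _ _.
rewrite -!addrA; congr (_ + _); rewrite addrC -!addrA; congr (_ + _); by rewrite addrC.
Qed.

Lemma const_of_grad s : mderiv i0 s = 0 -> mderiv i1 s = 0 -> s = (s@_0)%:MP.
Proof.
move=> h0 h1.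
have E : euler s = 0 by rewrite /euler h0 h1 !mulr0 addr0.
move: E; rewrite {1}(mpolyE s) euler_sum => E.
apply/mpolyP => k; rewrite mcoeffC.
case: (eqVneq k 0%MM) => [->|nk]; first by rewrite mulr1.
rewrite mulr0.
case kin: (k \in msupp s); last by apply: memN_msupp_eq0; rewrite kin.
have := congr1 (mcoeff k) E.
rewrite raddf_sum /= (bigD1_seq k) //= ?msupp_uniq // mcoeffZ mcoeffX eqxx mulr1.
rewrite big1 ?addr0 ?mcoeff0; last first.
  by move=> m /negPf nm; rewrite mcoeffZ mcoeffX nm mulr0.
move/eqP; rewrite mulf_eq0 pnatr_eq0 => /orP[/eqP //|/eqP d0].
suff km : k = 0%MM by rewrite km eqxx in nk.
apply/mnmP => j; rewrite mnm0E.
move: d0; rewrite mdeg2; have: (j == i0) || (j == i1).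
  by case: j => [[|[|]]] //.
by case/orP => /eqP ->; lia.
Qed.


Lemma curl_grad s : curl (grad s) = 0.
Proof. by rewrite /curl /grad /= mderiv_comm subrr. Qed.

Lemma poincare_int0 : poincare_int (0 : poly2 R) = 0.
Proof. by rewrite /poincare_int -mpolyC0 msupp0 big_nil. Qed.

Lemma poincare0 : poincare (0 : poly2 R) = vzero R.
Proof. by rewrite /poincare poincare_int0 !mulr0. Qed.

Lemma curl_poincare u : curl (poincare u) = u.
Proof.
rewrite /curl /poincare /= mulNr mderivN opprK !mderivM /x1 /x2 !mderivXi !mul1r.
rewrite addrACA -/(x1 R) -/(x2 R) -/(euler _) /poincare_int euler_sum.
rewrite -!big_split /= [in RHS](mpolyE u); apply: eq_bigr => m _.
rewrite -!scalerDl; congr (_ *: _).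
have nz : (mdeg m + 2)%:R != 0 :> R by rewrite pnatr_eq0 addn2.
move: nz; rewrite natrD => nz; field.
by [].
Qed.

Lemma curl_vadd a b : curl (vadd a b) = curl a + curl b :> poly2 R.
Proof. by rewrite /curl /vadd /= !mderivD; ring. Qed.

Lemma curl_vsub a b : curl (vsub a b) = curl a - curl b :> poly2 R.
Proof. by rewrite /curl /vsub /= !mderivB; ring. Qed.

End Aux.

Lemma inP0 (R : rcfType) j : inP j (0 : poly2 R).
Proof. by move=> m; rewrite -mpolyC0 msupp0. Qed.
Lemma inQ0 (R : rcfType) j : inQ j (0 : poly2 R).
Proof. by move=> m; rewrite -mpolyC0 msupp0. Qed.

Lemma vadd_g0 (R : rcfType) (v : vec R) : vadd (grad 0) v = v.
Proof. by case: v => a b; rewrite /vadd /grad /= !mderiv0 !add0r. Qed.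
Lemma vadd_v0 (R : rcfType) (v : vec R) : vadd v (vzero R) = v.
Proof. by case: v => a b; rewrite /vadd /vzero /= !addr0. Qed.

Theorem mainTheorem3 (R : rcfType) (k r : nat) (K : elem R)
    (Phi : poly2 R -> poly2 R) :
  (2 <= k)%N ->
  [|| r == k.-1, r == k | r == k.+1] ->
  valid_elem K ->
  Phi_admissible Phi k K ->
  (* the sum grad Sigma + (p or p~) W is direct *)
  (forall s w, Sigma r K s -> Wsp k K w ->
     vadd (grad s) (Pop Phi k r w) = vzero R ->
     grad s = vzero R /\ Pop Phi k r w = vzero R) /\
  (* the maps are well defined: R -> Sigma, grad : Sigma -> V, curl : V -> W *)
  (forall c : R, Sigma r K c%:MP) /\
  (forall s, Sigma r K s -> Vsp Phi k r K (grad s)) /\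
  (forall v, Vsp Phi k r K v -> Wsp k K (curl v)) /\
  (* complex *)
  (forall s, Sigma r K s -> curl (grad s) = 0) /\
  (* exactness at Sigma *)
  (forall s, Sigma r K s -> (grad s = vzero R <-> exists c : R, s = c%:MP)) /\
  (* exactness at V *)
  (forall v, Vsp Phi k r K v ->
     (curl v = 0 <-> exists s, Sigma r K s /\ v = grad s)) /\
  (* exactness at W (surjectivity of curl) *)
  (forall w, Wsp k K w -> exists v, Vsp Phi k r K v /\ curl v = w).
Proof.
move=> hk hr hK [hlin hedge hdeg].
have Wsp0 : Wsp k K 0.
  case: K {hlin hedge hdeg hK} => [a b c|xl xr yd yu] /=; case: ifP => _;
    try exact: inP0; try exact: inQ0;
    by exists 0, 0; split; [first [exact: inP0 | exact: inQ0] | rewrite scale0r addr0].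
have Sigma0 : Sigma r K 0 by case: K {hlin hedge hdeg hK Wsp0} => *; [exact: inP0|exact: inQ0].
have Phi0 : Phi 0 = 0.
  have := hlin 1 0 0 Wsp0 Wsp0; rewrite !scale1r addr0 => h.
  have : Phi 0 + Phi 0 = Phi 0 + 0 by rewrite addr0 -h.
  by move/addrI.
have curlPop w : curl (Pop Phi k r w) = w.
  rewrite /Pop; case: ifP => _; last exact: curl_poincare.
  by rewrite /mpoincare curl_vsub curl_poincare curl_grad subr0.
have Pop0 : Pop Phi k r 0 = vzero R.
  rewrite /Pop /mpoincare poincare0 Phi0; case: ifP => _ //.
  by rewrite /vsub /grad /vzero /= !mderiv0 subr0.
have curl0 : curl (vzero R) = 0 by rewrite /curl /vzero /= !mderiv0 subr0.
split.
  move=> s w _ _ h.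
  have := congr1 (@curl R) h; rewrite curl_vadd curl_grad add0r curlPop curl0 => w0.
  subst w; rewrite Pop0 in h *; split => //; by rewrite -h vadd_v0.
split.
  move=> c; case: K {hlin hedge hdeg hK Wsp0 Sigma0} => * m;
    rewrite msuppC; case: eqP => _ //; rewrite inE => /eqP ->;
    by rewrite ?mdeg0 ?mnm0E.
split.
  move=> s hs; exists s, 0; split => //; split => //; by rewrite Pop0 vadd_v0.
split.
  by move=> v [s [w [_ [hw ->]]]]; rewrite curl_vadd curl_grad add0r curlPop.
split.
  by move=> s _; exact: curl_grad.
split.
  move=> s hs; split.
    move=> h; exists s@_0%MM; apply: const_of_grad.
      exact: (congr1 fst h).
    exact: (congr1 snd h).
  by case=> c ->; rewrite /grad /vzero !mderivC.
split.
  move=> v [s [w [hs [hw ->]]]]; split.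
    rewrite curl_vadd curl_grad add0r curlPop => w0; subst w.
    by exists s; rewrite Pop0 vadd_v0.
  by case=> s' [_ ->]; exact: curl_grad.
move=> w hw; exists (Pop Phi k r w); split; last exact: curlPop.
by exists 0, w; split => //; split => //; rewrite vadd_g0.
Qed.
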